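(* Let $K$ be a circle of radius $1$ and centre $O$, and let $P$ be a point with $d=\mathrm{dist}(P,K)$ satisfying $0<d<1/2$. Let $Q\in K$ be such that the triangle $POQ$ is positively (counter-clockwise) oriented. (i) If $P$ is in the interior of $K$ and $|PQ|\ge 2\sqrt d$, then there is an angle $0<\alpha<\pi/2$ with $\sin\alpha<2\sqrt d$ such that the circle $K'$ obtained by rotating $K$ about $Q$ in the positive direction by angle $\alpha$ contains $P$. (ii) If $P$ is in the exterior of $K$ and $3\sqrt d\le |PQ|\le 2-d$, then there is an angle $0<\alpha<\pi/2$ with $\sin\alpha<2\sqrt d$ such that the circle $K'$ obtained by rotating $K$ about $Q$ in the negative direction by angle $\alpha$ contains $P$. Moreover, in both cases the distance between $O$ and the centre of $K'$ is less than $4\sqrt d$.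
   Context: $|AB|$ denotes the Euclidean distance between points $A,B$. The positive direction of rotation is counter-clockwise. *)

(* Defs.v *)
From Stdlib Require Import Reals.
Open Scope R_scope.

Definition pt : Type := (R * R)%type.

Definition edist (A B : pt) : R :=
  sqrt ((fst B - fst A)^2 + (snd B - snd A)^2).

Definition dist_to_circle (C : pt) (r : R) (P : pt) : R :=
  Rabs (edist C P - r).

(* Signed orientation (twice the signed area) of triangle ABC;
   positive iff A, B, C are in counter-clockwise order. *)
Definition orient (A B C : pt) : R :=
  (fst B - fst A) * (snd C - snd A) - (snd B - snd A) * (fst C - fst A).

Definition rot (Q : pt) (t : R) (X : pt) : pt :=
  (fst Q + cos t * (fst X - fst Q) - sin t * (snd X - snd Q),
   snd Q + sin t * (fst X - fst Q) + cos t * (snd X - snd Q)).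

(* Main.v *)
Require Import Defs.
From Stdlib Require Import Reals.
From Stdlib Require Import Lra Psatz.
Open Scope R_scope.

Lemma lt_sq (x y : R) : 0 <= y -> x*x < y*y -> x < y.
Proof. intros; nra. Qed.

Lemma core1 (D Y c r k : R) :
  0 < c -> 0 < r -> D*D + Y*Y = c*c -> 0 < Y ->
  2*D = c*c + (2*(r*r) - (r*r)*(r*r)) -> r*r < 1/2 -> 4*(r*r) <= c*c ->
  4*(k*k)*(c*c) = 4 - c*c -> 0 < k ->
  let u := D/2 + k*Y in let v := k*D - Y/2 in
  0 < u /\ 0 < v /\ u*u + v*v = 1 /\ u*D - v*Y = c*c/2 /\ v < 2*r /\ 2 - 2*u < 16*(r*r).
Proof.
  intros Hc Hr HDY HY HD Hr2 Hc2 Hk Hk0 u v.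
  assert (He : 0 < 2*(r*r) - (r*r)*(r*r)) by nra.
  assert (HDp : 0 < D) by nra.
  assert (Huv : u*u + v*v = 1) by (unfold u, v; nra).
  assert (Hu : 0 < u) by (unfold u; nra).
  assert (Hv : 0 < v).
  { unfold v. assert (Y/2 < k*D); [|lra].
    apply lt_sq; [nra|].
    assert (Y*Y*(c*c) < 4*(k*D)*(k*D)*(c*c)); [|nra].
    replace (4*(k*D)*(k*D)*(c*c)) with ((4 - c*c)*(D*D)) by nra.
    replace (Y*Y) with (c*c - D*D) by nra. nra. }
  assert (Hv2 : v < 2*r).
  { unfold v. assert (k*D < Y/2 + 2*r); [|lra].
    apply lt_sq; [nra|].
    assert (4*(k*D)*(k*D)*(c*c) < (Y + 4*r)*(Y+4*r)*(c*c)); [|nra].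
    replace (4*(k*D)*(k*D)*(c*c)) with ((4 - c*c)*(D*D)) by nra.
    replace ((Y + 4*r)*(Y+4*r)*(c*c)) with ((c*c-D*D)*(c*c) + 8*r*Y*(c*c) + 16*(r*r)*(c*c)) by nra.
    assert (0 < 8*r*Y*(c*c)) by (apply Rmult_lt_0_compat; nra).
    nra. }
  repeat split; auto.
  - unfold u, v; nra.
  - assert (1 - u <= v*v) by nra. nra.
Qed.

Lemma core2 (D Y c r k : R) :
  0 < c -> 0 < r -> D*D + Y*Y = c*c -> 0 < Y ->
  2*D = c*c - (2*(r*r) + (r*r)*(r*r)) -> r*r < 1/2 -> 9*(r*r) <= c*c ->
  4*(k*k)*(c*c) = 4 - c*c -> 0 < k ->
  let u := D/2 + k*Y in let v := Y/2 - k*D in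
  0 < u /\ 0 < v /\ u*u + v*v = 1 /\ u*D + v*Y = c*c/2 /\ v < 2*r /\ 2 - 2*u < 16*(r*r).
Proof.
  intros Hc Hr HDY HY HD Hr2 Hc2 Hk Hk0 u v.
  assert (He : 0 < 2*(r*r) + (r*r)*(r*r)) by nra.
  assert (HDp : 0 < D) by nra.
  assert (Huv : u*u + v*v = 1) by (unfold u, v; nra).
  assert (Hu : 0 < u) by (unfold u; nra).
  assert (Hv : 0 < v).
  { unfold v. assert (k*D < Y/2); [|lra].
    apply lt_sq; [nra|].
    assert (4*(k*D)*(k*D)*(c*c) < Y*Y*(c*c)); [|nra].
    replace (4*(k*D)*(k*D)*(c*c)) with ((4 - c*c)*(D*D)) by nra.
    replace (Y*Y) with (c*c - D*D) by nra. nra. }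
  assert (Hv2 : v < 2*r).
  { unfold v. destruct (Rle_or_lt Y (4*r)) as [HY4|HY4].
    - assert (0 < k*D) by nra. lra.
    - assert (Y/2 - 2*r < k*D); [|lra].
    apply lt_sq; [nra|].
    assert ((Y - 4*r)*(Y-4*r)*(c*c) < 4*(k*D)*(k*D)*(c*c)); [|nra].
    replace (4*(k*D)*(k*D)*(c*c)) with ((4 - c*c)*(D*D)) by nra.
    replace ((Y - 4*r)*(Y-4*r)*(c*c)) with ((c*c-D*D)*(c*c) - 8*r*Y*(c*c) + 16*(r*r)*(c*c)) by nra.
    assert (32*(r*r)*(c*c) < 8*r*Y*(c*c)).
    { assert (0 < r*(c*c)) by nra. nra. }
    nra. }
  repeat split; auto.
  - unfold u, v; nra.
  - assert (1 - u <= v*v) by nra. nra.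
Qed.

Lemma sqrt_sq_eq (x y : R) : 0 <= x -> sqrt x = y -> x = y*y.
Proof. intros Hx <-. symmetry. apply sqrt_sqrt; auto. Qed.

Lemma sqrt_lt_pos (x y : R) : 0 <= x -> 0 < y -> x < y*y -> sqrt x < y.
Proof.
  intros Hx Hy H. rewrite <- (sqrt_square y) by lra.
  apply sqrt_lt_1; nra.
Qed.

Lemma asin_pos (v : R) : 0 < v < 1 -> 0 < asin v /\ asin v < PI/2 /\ sin (asin v) = v.
Proof.
  intros Hv. destruct (asin_bound_lt v ltac:(lra)) as [H1 H2].
  assert (Hs : sin (asin v) = v) by (apply sin_asin; lra).
  repeat split; auto.
  destruct (Rle_or_lt (asin v) 0) as [H|H]; auto.
  exfalso. assert (0 <= sin (- asin v)) by (apply sin_ge_0; lra).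
  rewrite sin_neg, Hs in H0. lra.
Qed.

Theorem lemma1 (O P Q : pt) :
  let d := dist_to_circle O 1 P in
  0 < d -> d < 1/2 ->
  edist O Q = 1 ->
  orient P O Q > 0 ->
  (edist O P < 1 -> edist P Q >= 2 * sqrt d ->
     exists alpha, 0 < alpha /\ alpha < PI/2 /\ sin alpha < 2 * sqrt d /\
       edist (rot Q alpha O) P = 1 /\
       edist O (rot Q alpha O) < 4 * sqrt d) /\
  (edist O P > 1 -> 3 * sqrt d <= edist P Q -> edist P Q <= 2 - d ->
     exists alpha, 0 < alpha /\ alpha < PI/2 /\ sin alpha < 2 * sqrt d /\
       edist (rot Q (- alpha) O) P = 1 /\
       edist O (rot Q (- alpha) O) < 4 * sqrt d).
Proof.
  intros d Hd0 Hd1 HOQ Hor.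
  destruct O as [o1 o2], P as [p1 p2], Q as [q1 q2].
  unfold d, dist_to_circle in *. clear d.
  unfold orient in Hor. simpl in Hor.
  set (L := edist (o1, o2) (p1, p2)) in *.
  set (c := edist (p1, p2) (q1, q2)) in *.
  set (r := sqrt (Rabs (L - 1))) in *.
  assert (Hr2 : r * r = Rabs (L - 1)) by (apply sqrt_sqrt; lra).
  assert (Hr : 0 < r) by (apply sqrt_lt_R0; lra).
  set (w1 := o1 - q1). set (w2 := o2 - q2). set (a1 := p1 - q1). set (a2 := p2 - q2).
  assert (Hw : w1*w1 + w2*w2 = 1).
  { unfold edist in HOQ; simpl in HOQ. apply sqrt_sq_eq in HOQ; [|apply Rplus_le_le_0_compat; apply pow2_ge_0].
    unfold w1, w2. nra. }
  assert (Hc : c*c = a1*a1 + a2*a2).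
  { unfold c, edist; simpl. rewrite sqrt_sqrt by (apply Rplus_le_le_0_compat; apply pow2_ge_0). unfold a1, a2. ring. }
  assert (Hc0 : 0 <= c) by (unfold c, edist; apply sqrt_pos).
  assert (HL : L*L = (a1-w1)*(a1-w1) + (a2-w2)*(a2-w2)).
  { unfold L, edist; simpl. rewrite sqrt_sqrt by (apply Rplus_le_le_0_compat; apply pow2_ge_0). unfold a1, a2, w1, w2. ring. }
  assert (HL0 : 0 <= L) by (unfold L, edist; apply sqrt_pos).
  set (D := w1*a1 + w2*a2). set (Y := w2*a1 - w1*a2).
  assert (HY : 0 < Y).
  { unfold Y, w1, w2, a1, a2. nra. }
  assert (HDY : D*D + Y*Y = c*c).
  { rewrite Hc. unfold D, Y.
    replace ((w1 * a1 + w2 * a2) * (w1 * a1 + w2 * a2) + (w2 * a1 - w1 * a2) * (w2 * a1 - w1 * a2))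
      with ((w1*w1+w2*w2)*(a1*a1+a2*a2)) by ring. rewrite Hw. ring. }
  assert (HL2 : L*L = 1 + c*c - 2*D).
  { rewrite HL, Hc. unfold D. nra. }
  split.
  - intros HL1 Hcr. rewrite Rabs_left in Hr2, Hd1 by lra.
    fold r in Hcr.
    assert (Hcp : 0 < c) by lra.
    assert (HLr : L = 1 - r*r) by lra.
    assert (HD : 2*D = c*c + (2*(r*r) - (r*r)*(r*r))) by (rewrite HLr in HL2; nra).
    assert (HDc : D <= c) by nra.
    assert (Hc2 : c < 2) by nra.
    set (s := sqrt (4 - c*c)).
    assert (Hs2 : s*s = 4 - c*c) by (apply sqrt_sqrt; nra).
    assert (Hs : 0 < s) by (apply sqrt_lt_R0; nra).
    set (k := s / (2*c)).
    assert (Hkc : k*(2*c) = s) by (unfold k; field; lra).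
    assert (Hk : 4*(k*k)*(c*c) = 4 - c*c) by nra.
    assert (Hk0 : 0 < k) by (unfold k; apply Rdiv_lt_0_compat; lra).
    assert (Hrh : r*r < 1/2) by lra.
    assert (Hc4 : 4*(r*r) <= c*c) by nra.
    destruct (core1 D Y c r k Hcp Hr HDY HY HD Hrh Hc4 Hk Hk0)
      as (Hu & Hv & Huv & Heq & Hvr & Hdist).
    set (u := D/2 + k*Y) in *. set (v := k*D - Y/2) in *.
    assert (Hv1 : 0 < v < 1) by nra.
    destruct (asin_pos v Hv1) as (Ha1 & Ha2 & Hsin).
    assert (Hcos : cos (asin v) = u).
    { rewrite cos_asin by nra. replace (1 - v²) with (u*u) by (unfold Rsqr; lra).
      apply sqrt_square; lra. }
    exists (asin v). repeat split; auto.
    + rewrite Hsin; auto.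
    + unfold rot, edist; simpl. rewrite Hsin, Hcos.
      transitivity (sqrt 1); [|apply sqrt_1]. f_equal. fold w1 w2.
      replace (p1 - (q1 + u * w1 - v * w2)) with (a1 - u*w1 + v*w2) by (unfold a1; ring).
      replace (p2 - (q2 + v * w1 + u * w2)) with (a2 - v*w1 - u*w2) by (unfold a2; ring).
      transitivity (c*c + (u*u+v*v)*(w1*w1+w2*w2) - 2*(u*D - v*Y)).
      { rewrite Hc; unfold D, Y; ring. }
      rewrite Huv, Hw, Heq; field.
    + unfold rot, edist; simpl. rewrite Hsin, Hcos. fold w1 w2.
      apply sqrt_lt_pos; [apply Rplus_le_le_0_compat; apply pow2_ge_0|lra|].
      replace (q1 + u * w1 - v * w2 - o1) with (u*w1 - v*w2 - w1) by (unfold w1; ring).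
      replace (q2 + v * w1 + u * w2 - o2) with (v*w1 + u*w2 - w2) by (unfold w2; ring).
      replace (4*r*(4*r)) with (16*(r*r)) by ring. eapply Rle_lt_trans; [|exact Hdist]. right.
      transitivity ((u*u+v*v)*(w1*w1+w2*w2) + (w1*w1+w2*w2) - 2*u*(w1*w1+w2*w2)); [ring|].
      rewrite Huv, Hw; ring.
  - intros HL1 Hcr Hc2. rewrite Rabs_right in Hr2, Hd1 by lra.
    fold r in Hcr.
    assert (Hcp : 0 < c) by lra.
    assert (HLr : L = 1 + r*r) by lra.
    assert (HD : 2*D = c*c - (2*(r*r) + (r*r)*(r*r))) by (rewrite HLr in HL2; nra).
    set (s := sqrt (4 - c*c)).
    assert (Hs2 : s*s = 4 - c*c) by (apply sqrt_sqrt; nra).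
    assert (Hs : 0 < s) by (apply sqrt_lt_R0; nra).
    set (k := s / (2*c)).
    assert (Hkc : k*(2*c) = s) by (unfold k; field; lra).
    assert (Hk : 4*(k*k)*(c*c) = 4 - c*c) by nra.
    assert (Hk0 : 0 < k) by (unfold k; apply Rdiv_lt_0_compat; lra).
    assert (Hrh : r*r < 1/2) by lra.
    assert (Hc4 : 9*(r*r) <= c*c) by nra.
    destruct (core2 D Y c r k Hcp Hr HDY HY HD Hrh Hc4 Hk Hk0)
      as (Hu & Hv & Huv & Heq & Hvr & Hdist).
    set (u := D/2 + k*Y) in *. set (v := Y/2 - k*D) in *.
    assert (Hv1 : 0 < v < 1) by nra.
    destruct (asin_pos v Hv1) as (Ha1 & Ha2 & Hsin).
    assert (Hcos : cos (asin v) = u).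
    { rewrite cos_asin by nra. replace (1 - v²) with (u*u) by (unfold Rsqr; lra).
      apply sqrt_square; lra. }
    exists (asin v). repeat split; auto.
    + rewrite Hsin; auto.
    + unfold rot, edist; simpl. rewrite sin_neg, cos_neg, Hsin, Hcos.
      transitivity (sqrt 1); [|apply sqrt_1]. f_equal. fold w1 w2.
      replace (p1 - (q1 + u * w1 - - v * w2)) with (a1 - u*w1 - v*w2) by (unfold a1; ring).
      replace (p2 - (q2 + - v * w1 + u * w2)) with (a2 + v*w1 - u*w2) by (unfold a2; ring).
      transitivity (c*c + (u*u+v*v)*(w1*w1+w2*w2) - 2*(u*D + v*Y)).
      { rewrite Hc; unfold D, Y; ring. }
      rewrite Huv, Hw, Heq; field.
    + unfold rot, edist; simpl. rewrite sin_neg, cos_neg, Hsin, Hcos. fold w1 w2.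
      apply sqrt_lt_pos; [apply Rplus_le_le_0_compat; apply pow2_ge_0|lra|].
      replace (q1 + u * w1 - - v * w2 - o1) with (u*w1 + v*w2 - w1) by (unfold w1; ring).
      replace (q2 + - v * w1 + u * w2 - o2) with (- v*w1 + u*w2 - w2) by (unfold w2; ring).
      replace (4*r*(4*r)) with (16*(r*r)) by ring. eapply Rle_lt_trans; [|exact Hdist]. right.
      transitivity ((u*u+v*v)*(w1*w1+w2*w2) + (w1*w1+w2*w2) - 2*u*(w1*w1+w2*w2)); [ring|].
      rewrite Huv, Hw; ring.
Qed.
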